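(* Let $F(x)$ be a quantifier-free formula and let $\mathbf c$ be a nonempty finite set of object constants containing every object constant occurring in $F(x)$. (a) If $x$ is positively weakly restricted in $F(x)$, then $\neg\mathit{in}_{\mathbf c}(x)\rightarrow(F(x)\leftrightarrow\top)$ is derivable from $\mathit{SPP}_{\mathbf c}$ in $\mathbf{INT}^=$. (b) If $x$ is negatively weakly restricted in $F(x)$, then $\neg\mathit{in}_{\mathbf c}(x)\rightarrow(F(x)\leftrightarrow\bot)$ is derivable from $\mathit{SPP}_{\mathbf c}$ in $\mathbf{INT}^=$.
   Context: Formulas are first-order formulas with object constants, predicate constants and equality, but no function constants of arity $>0$; primitive connectives $\bot,\land,\lor,\rightarrow$; $\neg G$ is $G\rightarrow\bot$, $\top$ is $\bot\rightarrow\bot$, $G\leftrightarrow H$ is $(G\rightarrow H)\land(H\rightarrow G)$. Restricted variables: for quantifier-free $G$, $\mathrm{RV}(G)$ is: $\emptyset$ if $G$ is an equality between two variables; the set of variables of $G$ if $G$ is any other atomic formula; $\mathrm{RV}(\bot)=\emptyset$; $\mathrm{RV}(G\land H)=\mathrm{RV}(G)\cup\mathrm{RV}(H)$; $\mathrm{RV}(G\lor H)=\mathrm{RV}(G)\cap\mathrm{RV}(H)$; $\mathrm{RV}(G\rightarrow H)=\emptyset$. Simplification transformations: $\neg\bot\mapsto\top$, $\neg\top\mapsto\bot$; $\bot\land G\mapsto\bot$, $G\land\bot\mapsto\bot$, $\top\land G\mapsto G$, $G\land\top\mapsto G$; $\bot\lor G\mapsto G$, $G\lor\bot\mapsto G$,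 $\top\lor G\mapsto\top$, $G\lor\top\mapsto\top$; $\bot\rightarrow G\mapsto\top$, $G\rightarrow\top\mapsto\top$, $\top\rightarrow G\mapsto G$. A variable $x$ is positively (resp. negatively) weakly restricted in a quantifier-free formula $G$ if the formula obtained from $G$ by first replacing every atomic formula $A$ of $G$ with $x\in\mathrm{RV}(A)$ by $\bot$ and then applying the simplification transformations is $\top$ (resp. $\bot$). For a finite set $\mathbf c$ of object constants, $\mathit{in}_{\mathbf c}(x_1,\dots,x_m)$ is $\bigwedge_{1\le j\le m}\bigvee_{c\in\mathbf c}x_j=c$, and $\mathit{SPP}_{\mathbf c}$ is the conjunction of the sentences $\forall\mathbf x(p_i(\mathbf x)\rightarrow\mathit{in}_{\mathbf c}(\mathbf x))$ over all predicate constants $p_i$ occurring in $F(x)$. $\mathbf{INT}^=$ is intuitionistic predicate logic with equality. *)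

(* Defs.v *)
From Stdlib Require Import List Arith Bool.
Import ListNotations.

(* Terms: variables (de Bruijn indices) and object constants; no function constants. *)
Inductive term : Type :=
| tvar (n : nat)
| tconst (c : nat).

(* Formulas.  A predicate constant is identified by its name together with its
   arity (= length of the argument list). *)
Inductive form : Type :=
| fbot
| fatom (p : nat) (args : list term)
| feq (t s : term)
| fand (a b : form)
| for_ (a b : form)
| fimp (a b : form)
| fall (a : form)
| fex (a : form).

Definition ftop : form := fimp fbot fbot.
Definition fneg (a : form) : form := fimp a fbot.
Definition fiff (a b : form) : form := fand (fimp a b) (fimp b a).

Fixpoint big_and (l : list form) : form :=
  match l with
  | [] => ftop
  | [a] => a
  | a :: l' => fand a (big_and l')
  end.

Fixpoint big_or (l : list form) : form :=
  match l with
  | [] => fbot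
  | [a] => a
  | a :: l' => for_ a (big_or l')
  end.

Definition subst_term (s : nat -> term) (t : term) : term :=
  match t with tvar n => s n | tconst c => tconst c end.

Definition shift : nat -> term := fun n => tvar (S n).

Definition up (s : nat -> term) : nat -> term :=
  fun n => match n with 0 => tvar 0 | S m => subst_term shift (s m) end.

Definition scons (t : term) (s : nat -> term) : nat -> term :=
  fun n => match n with 0 => t | S m => s m end.

Fixpoint subst (s : nat -> term) (f : form) : form :=
  match f with
  | fbot => fbot
  | fatom p args => fatom p (map (subst_term s) args)
  | feq t u => feq (subst_term s t) (subst_term s u)
  | fand a b => fand (subst s a) (subst s b)
  | for_ a b => for_ (subst s a) (subst s b)
  | fimp a b => fimp (subst s a) (subst s b)
  | fall a => fall (subst (up s) a)
  | fex a => fex (subst (up s) a)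
  end.

Inductive prv : list form -> form -> Prop :=
| Ctx G a : In a G -> prv G a
| ImpI G a b : prv (a :: G) b -> prv G (fimp a b)
| ImpE G a b : prv G (fimp a b) -> prv G a -> prv G b
| BotE G a : prv G fbot -> prv G a
| AndI G a b : prv G a -> prv G b -> prv G (fand a b)
| AndE1 G a b : prv G (fand a b) -> prv G a
| AndE2 G a b : prv G (fand a b) -> prv G b
| OrI1 G a b : prv G a -> prv G (for_ a b)
| OrI2 G a b : prv G b -> prv G (for_ a b)
| OrE G a b c : prv G (for_ a b) -> prv (a :: G) c -> prv (b :: G) c -> prv G c
| AllI G a : prv (map (subst shift) G) a -> prv G (fall a)
| AllE G a t : prv G (fall a) -> prv G (subst (scons t tvar) a)
| ExI G a t : prv G (subst (scons t tvar) a) -> prv G (fex a)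
| ExE G a b : prv G (fex a) -> prv (a :: map (subst shift) G) (subst shift b) -> prv G b
| EqRefl G t : prv G (feq t t)
| EqElim G a t u : prv G (feq t u) -> prv G (subst (scons t tvar) a) ->
                   prv G (subst (scons u tvar) a).

Fixpoint qf (f : form) : Prop :=
  match f with
  | fall _ | fex _ => False
  | fand a b | for_ a b | fimp a b => qf a /\ qf b
  | _ => True
  end.

Definition term_consts (t : term) : list nat :=
  match t with tvar _ => [] | tconst c => [c] end.
Definition term_vars (t : term) : list nat :=
  match t with tvar n => [n] | tconst _ => [] end.

Fixpoint consts (f : form) : list nat :=
  match f with
  | fbot => []
  | fatom _ args => flat_map term_consts args
  | feq t u => term_consts t ++ term_consts u
  | fand a b | for_ a b | fimp a b => consts a ++ consts b
  | fall a | fex a => consts a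
  end.

Fixpoint preds (f : form) : list (nat * nat) :=
  match f with
  | fatom p args => [(p, length args)]
  | fand a b | for_ a b | fimp a b => preds a ++ preds b
  | fall a | fex a => preds a
  | _ => []
  end.

(* x ∈ RV(G), for quantifier-free G *)
Fixpoint rv (x : nat) (g : form) : bool :=
  match g with
  | fbot => false
  | feq (tvar _) (tvar _) => false
  | feq t u => existsb (Nat.eqb x) (term_vars t ++ term_vars u)
  | fatom _ args => existsb (Nat.eqb x) (flat_map term_vars args)
  | fand a b => rv x a || rv x b
  | for_ a b => rv x a && rv x b
  | fimp _ _ => false
  | fall _ | fex _ => false
  end.

Fixpoint kill (x : nat) (g : form) : form :=
  match g with
  | fatom _ _ | feq _ _ => if rv x g then fbot else g
  | fand a b => fand (kill x a) (kill x b)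
  | for_ a b => for_ (kill x a) (kill x b)
  | fimp a b => fimp (kill x a) (kill x b)
  | _ => g
  end.

Definition is_bot (f : form) : bool := match f with fbot => true | _ => false end.
Definition is_top (f : form) : bool :=
  match f with fimp fbot fbot => true | _ => false end.

(* exhaustive application of the simplification transformations
   (bottom-up; yields the normal form) *)
Fixpoint simp (f : form) : form :=
  match f with
  | fand a b =>
      let a' := simp a in let b' := simp b in
      if is_bot a' || is_bot b' then fbot
      else if is_top a' then b' else if is_top b' then a' else fand a' b'
  | for_ a b =>
      let a' := simp a in let b' := simp b in
      if is_top a' || is_top b' then ftop
      else if is_bot a' then b' else if is_bot b' then a' else for_ a' b'
  | fimp a b =>
      let a' := simp a in let b' := simp b in
      if is_bot a' || is_top b' then ftop
      else if is_top a' then b' else fimp a' b'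
  | _ => f
  end.

Definition pos_weakly_restricted (x : nat) (g : form) : Prop := simp (kill x g) = ftop.
Definition neg_weakly_restricted (x : nat) (g : form) : Prop := simp (kill x g) = fbot.

Definition in1 (c : list nat) (t : term) : form :=
  big_or (map (fun a => feq t (tconst a)) c).
Definition in_c (c : list nat) (ts : list term) : form := big_and (map (in1 c) ts).

Fixpoint nall (n : nat) (f : form) : form :=
  match n with 0 => f | S m => fall (nall m f) end.

Definition spp_pred (c : list nat) (pn : nat * nat) : form :=
  let vs := map tvar (seq 0 (snd pn)) in
  nall (snd pn) (fimp (fatom (fst pn) vs) (in_c c vs)).

Definition pair_eq_dec : forall x y : nat * nat, {x = y} + {x <> y}.
Proof. decide equality; apply Nat.eq_dec. Defined.

Definition SPP (c : list nat) (F : form) : form :=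
  big_and (map (spp_pred c) (nodup pair_eq_dec (preds F))).

(* Main.v *)
Require Import Defs.
From Stdlib Require Import List Arith Lia Bool.
Import ListNotations.

Lemma weak G a : prv G a -> forall G', incl G G' -> prv G' a.
Proof.
  induction 1; intros G' Hi.
  - apply Ctx; auto.
  - apply ImpI; apply IHprv; intros y [<-|Hy]; [left; auto|right; auto].
  - eapply ImpE; eauto.
  - apply BotE; auto.
  - apply AndI; auto.
  - eapply AndE1; eauto.
  - eapply AndE2; eauto.
  - apply OrI1; auto.
  - apply OrI2; auto.
  - eapply OrE; [eauto| apply IHprv2 | apply IHprv3];
      (apply incl_cons; [left; reflexivity| apply incl_tl; auto]).
  - apply AllI; apply IHprv; apply incl_map; auto.
  - apply AllE; auto.
  - eapply ExI; eauto.
  - eapply ExE; [eauto|]. apply IHprv2. intros y [<-|Hy]; [left; auto|right].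
    eapply incl_map; eauto.
  - apply EqRefl.
  - eapply EqElim; eauto.
Qed.

Definition eqv G a b := prv G (fimp a b) /\ prv G (fimp b a).

Lemma ax G a : prv (a :: G) a.
Proof. apply Ctx; left; auto. Qed.

Lemma wk1 G a b : prv G a -> prv (b :: G) a.
Proof. intro H; eapply weak; eauto; intros y Hy; right; auto. Qed.

Lemma eqv_refl G a : eqv G a a.
Proof. split; apply ImpI; apply ax. Qed.
Lemma eqv_sym G a b : eqv G a b -> eqv G b a.
Proof. intros [? ?]; split; auto. Qed.
Lemma eqv_trans G a b c : eqv G a b -> eqv G b c -> eqv G a c.
Proof.
  intros [H1 H2] [H3 H4]; split; apply ImpI.
  - eapply ImpE; [apply wk1; exact H3|]. eapply ImpE; [apply wk1; exact H1| apply ax].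
  - eapply ImpE; [apply wk1; exact H2|]. eapply ImpE; [apply wk1; exact H4| apply ax].
Qed.

Lemma mp G a b : prv G (fimp a b) -> prv G a -> prv G b.
Proof. intros; eapply ImpE; eauto. Qed.

Lemma eqv_and G a b a' b' : eqv G a a' -> eqv G b b' -> eqv G (fand a b) (fand a' b').
Proof.
  intros [H1 H2] [H3 H4]; split; apply ImpI; apply AndI.
  - eapply mp; [apply wk1; eauto|]. eapply AndE1; apply ax.
  - eapply mp; [apply wk1; eauto|]. eapply AndE2; apply ax.
  - eapply mp; [apply wk1; eauto|]. eapply AndE1; apply ax.
  - eapply mp; [apply wk1; eauto|]. eapply AndE2; apply ax.
Qed.

Lemma eqv_or G a b a' b' : eqv G a a' -> eqv G b b' -> eqv G (for_ a b) (for_ a' b').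
Proof.
  intros [H1 H2] [H3 H4]; split; apply ImpI; (eapply OrE; [apply ax| |]).
  - apply OrI1; eapply mp; [apply wk1; apply wk1; eauto| apply ax].
  - apply OrI2; eapply mp; [apply wk1; apply wk1; eauto| apply ax].
  - apply OrI1; eapply mp; [apply wk1; apply wk1; eauto| apply ax].
  - apply OrI2; eapply mp; [apply wk1; apply wk1; eauto| apply ax].
Qed.

Lemma eqv_imp G a b a' b' : eqv G a a' -> eqv G b b' -> eqv G (fimp a b) (fimp a' b').
Proof.
  intros [H1 H2] [H3 H4]; split; apply ImpI; apply ImpI.
  - eapply mp; [apply wk1; apply wk1; eauto|].
    eapply mp; [apply wk1; apply ax|].
    eapply mp; [apply wk1; apply wk1; eauto| apply ax].
  - eapply mp; [apply wk1; apply wk1; eauto|].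
    eapply mp; [apply wk1; apply ax|].
    eapply mp; [apply wk1; apply wk1; eauto| apply ax].
Qed.

Lemma top_prv G : prv G ftop.
Proof. apply ImpI; apply ax. Qed.

Lemma is_bot_spec f : is_bot f = true -> f = fbot.
Proof. destruct f; simpl; congruence. Qed.
Lemma is_top_spec f : is_top f = true -> f = ftop.
Proof. destruct f; simpl; try congruence. destruct f1; try congruence; destruct f2; try congruence; reflexivity. Qed.

Lemma eqv_simp G f : eqv G f (simp f).
Proof.
  revert G; induction f; intro G; try apply eqv_refl.
  - simpl. eapply eqv_trans; [apply eqv_and; [apply IHf1|apply IHf2]|].
    destruct (is_bot (simp f1)) eqn:E1; [apply is_bot_spec in E1; rewrite E1|];
    [ split; apply ImpI; [eapply AndE1; apply ax| apply BotE; apply ax] |].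
    destruct (is_bot (simp f2)) eqn:E2; [apply is_bot_spec in E2; rewrite E2|]; simpl;
    [ split; apply ImpI; [eapply AndE2; apply ax| apply BotE; apply ax] |].
    destruct (is_top (simp f1)) eqn:E3; [apply is_top_spec in E3; rewrite E3|];
    [ split; apply ImpI; [eapply AndE2; apply ax| apply AndI; [apply top_prv|apply ax]] |].
    destruct (is_top (simp f2)) eqn:E4; [apply is_top_spec in E4; rewrite E4|];
    [ split; apply ImpI; [eapply AndE1; apply ax| apply AndI; [apply ax|apply top_prv]] |].
    apply eqv_refl.
  - simpl. eapply eqv_trans; [apply eqv_or; [apply IHf1|apply IHf2]|].
    destruct (is_top (simp f1)) eqn:E1; [apply is_top_spec in E1; rewrite E1|];
    [ split; apply ImpI; [apply top_prv| apply OrI1; apply top_prv] |].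
    destruct (is_top (simp f2)) eqn:E2; [apply is_top_spec in E2; rewrite E2|]; simpl;
    [ split; apply ImpI; [apply top_prv| apply OrI2; apply top_prv] |].
    destruct (is_bot (simp f1)) eqn:E3; [apply is_bot_spec in E3; rewrite E3|];
    [ split; apply ImpI; [eapply OrE; [apply ax| apply BotE; apply ax| apply ax]| apply OrI2; apply ax] |].
    destruct (is_bot (simp f2)) eqn:E4; [apply is_bot_spec in E4; rewrite E4|];
    [ split; apply ImpI; [eapply OrE; [apply ax| apply ax| apply BotE; apply ax]| apply OrI1; apply ax] |].
    apply eqv_refl.
  - simpl. eapply eqv_trans; [apply eqv_imp; [apply IHf1|apply IHf2]|].
    destruct (is_bot (simp f1)) eqn:E1; [apply is_bot_spec in E1; rewrite E1|];
    [ split; apply ImpI; [apply top_prv| apply ImpI; apply BotE; apply ax] |].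
    destruct (is_top (simp f2)) eqn:E2; [apply is_top_spec in E2; rewrite E2|]; simpl;
    [ split; apply ImpI; [apply top_prv| apply ImpI; apply top_prv] |].
    destruct (is_top (simp f1)) eqn:E3; [apply is_top_spec in E3; rewrite E3|];
    [ split; apply ImpI; [eapply mp; [apply ax|apply top_prv]| apply ImpI; apply wk1; apply ax] |].
    apply eqv_refl.
Qed.

Fixpoint upn n s := match n with 0 => s | S m => upn m (up s) end.

Lemma subst_nall n : forall s f, subst s (nall n f) = nall n (subst (upn n s) f).
Proof. induction n; intros; simpl; auto. rewrite IHn; auto. Qed.

Definition shiftn k t := match t with tvar v => tvar (k+v) | tconst c => tconst c end.

Lemma upn_spec n : forall s i, upn n s i = if i <? n then tvar i else shiftn n (s (i-n)).
Proof.
  induction n; intros s i; simpl.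
  - rewrite Nat.sub_0_r; destruct (s i); reflexivity.
  - rewrite IHn. destruct (Nat.ltb_spec i n), (Nat.ltb_spec i (S n)); try lia; auto.
    + assert (i = n) by lia; subst. rewrite Nat.sub_diag; simpl; f_equal; lia.
    + replace (i - n) with (S (i - S n)) by lia. simpl. destruct (s (i - S n)); simpl; auto.
      all: f_equal; lia.
Qed.

Lemma subst_term_ext s s' t : (forall i, s i = s' i) -> subst_term s t = subst_term s' t.
Proof. destruct t; simpl; auto. Qed.

Lemma subst_ext_qf f : qf f -> forall s s', (forall i, s i = s' i) -> subst s f = subst s' f.
Proof.
  induction f; simpl; intros Hq s1 s2 He; try tauto.
  - f_equal; apply map_ext; intro; apply subst_term_ext; auto.
  - f_equal; apply subst_term_ext; auto.
  - f_equal; [apply IHf1|apply IHf2]; tauto.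
  - f_equal; [apply IHf1|apply IHf2]; tauto.
  - f_equal; [apply IHf1|apply IHf2]; tauto.
Qed.

Lemma subst_term_comp s s' t : subst_term s (subst_term s' t) = subst_term (fun i => subst_term s (s' i)) t.
Proof. destruct t; simpl; auto. Qed.

Lemma subst_comp_qf f : qf f -> forall s s', subst s (subst s' f) = subst (fun i => subst_term s (s' i)) f.
Proof.
  induction f; simpl; intros Hq s1 s2; try tauto.
  - f_equal; rewrite map_map; apply map_ext; intro; apply subst_term_comp.
  - f_equal; apply subst_term_comp.
  - f_equal; [apply IHf1|apply IHf2]; tauto.
  - f_equal; [apply IHf1|apply IHf2]; tauto.
  - f_equal; [apply IHf1|apply IHf2]; tauto.
Qed.

Lemma subst_id_qf f : qf f -> subst tvar f = f.
Proof.
  induction f; simpl; intros Hq; try tauto.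
  - f_equal. rewrite <- (map_id args) at 2. apply map_ext; intros []; auto.
  - destruct t, s; auto.
  - f_equal; [apply IHf1|apply IHf2]; tauto.
  - f_equal; [apply IHf1|apply IHf2]; tauto.
  - f_equal; [apply IHf1|apply IHf2]; tauto.
Qed.

Lemma qf_subst f : qf f -> forall s, qf (subst s f).
Proof. induction f; simpl; intros H s0; auto; try tauto; (split; [apply IHf1|apply IHf2]; tauto). Qed.

Definition tau n (sg : nat -> term) i := if i <? n then sg i else tvar (i - n).

Lemma nall_inst n : forall f sg G, qf f -> prv G (nall n f) -> prv G (subst (tau n sg) f).
Proof.
  induction n; intros f sg G Hq H.
  - rewrite (subst_ext_qf f Hq _ tvar), subst_id_qf; auto.
    intro i; unfold tau; simpl; f_equal; lia.
  - simpl in H. apply AllE with (t := sg n) in H. rewrite subst_nall in H.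
    apply IHn with (sg := sg) in H; [|apply qf_subst; auto].
    rewrite subst_comp_qf in H; auto.
    erewrite subst_ext_qf; [exact H|auto|].
    intro i; symmetry. rewrite upn_spec. unfold tau.
    destruct (Nat.ltb_spec i n), (Nat.ltb_spec i (S n)); try lia; simpl.
    + destruct (Nat.ltb_spec i n); auto; lia.
    + assert (i = n) by lia; subst. rewrite Nat.sub_diag; simpl.
      destruct (sg n); simpl; auto.
      destruct (Nat.ltb_spec (n + n0) n); try lia. f_equal; lia.
    + replace (i - n) with (S (i - S n)) by lia. simpl.
      destruct (Nat.ltb_spec (n + (i - S n)) n); try lia. f_equal; lia.
Qed.

Lemma big_and_elim G l a : prv G (big_and l) -> In a l -> prv G a.
Proof.
  induction l as [|b l IH]; simpl; [tauto|].
  destruct l as [|b' l'].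
  - intros H [<-|[]]; auto.
  - intros H [<-|Hi]; [eapply AndE1; eauto| apply IH; [eapply AndE2; eauto|auto]].
Qed.

Lemma big_or_intro G l a : In a l -> prv G a -> prv G (big_or l).
Proof.
  induction l as [|b l IH]; simpl; [tauto|].
  destruct l as [|b' l'].
  - intros [<-|[]] H; auto.
  - intros [<-|Hi] H; [apply OrI1; auto| apply OrI2; auto].
Qed.

Lemma subst_big_and s l : subst s (big_and l) = big_and (map (subst s) l).
Proof.
  induction l as [|b l IH]; [reflexivity|].
  destruct l as [|b' l']; [reflexivity|].
  change (fand (subst s b) (subst s (big_and (b' :: l'))) = big_and (map (subst s) (b :: b' :: l'))).
  rewrite IH. reflexivity.
Qed.

Lemma subst_big_or s l : subst s (big_or l) = big_or (map (subst s) l).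
Proof.
  induction l as [|b l IH]; [reflexivity|].
  destruct l as [|b' l']; [reflexivity|].
  change (for_ (subst s b) (subst s (big_or (b' :: l'))) = big_or (map (subst s) (b :: b' :: l'))).
  rewrite IH. reflexivity.
Qed.

Lemma subst_in_c s c ts : subst s (in_c c ts) = in_c c (map (subst_term s) ts).
Proof.
  unfold in_c. rewrite subst_big_and, !map_map. f_equal. apply map_ext; intro t.
  unfold in1. rewrite subst_big_or, map_map. reflexivity.
Qed.

Lemma qf_big_and l : (forall a, In a l -> qf a) -> qf (big_and l).
Proof.
  induction l as [|b l IH]; simpl; intros H; [tauto|].
  destruct l as [|b' l']; auto.
  split; auto.
Qed.

Lemma qf_big_or l : (forall a, In a l -> qf a) -> qf (big_or l).
Proof.
  induction l as [|b l IH]; simpl; intros H; [tauto|].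
  destruct l as [|b' l']; auto.
  split; auto.
Qed.

Lemma qf_in_c c ts : qf (in_c c ts).
Proof.
  apply qf_big_and. intros a Ha. apply in_map_iff in Ha as [t [<- _]].
  apply qf_big_or. intros b Hb. apply in_map_iff in Hb as [d [<- _]]. exact I.
Qed.

Lemma map_nth_seq (l : list term) d : map (fun i => nth i l d) (seq 0 (length l)) = l.
Proof.
  induction l as [|a l IH]; [reflexivity|].
  simpl. f_equal. rewrite <- seq_shift, map_map. exact IH.
Qed.

Section Main.
Variables (F : form) (x : nat) (c : list nat).
Definition Gm := [fneg (in_c c [tvar x]); SPP c F].

Lemma atom_bot p args : In (p, length args) (preds F) -> In (tvar x) args ->
  prv Gm (fimp (fatom p args) fbot).
Proof.
  intros Hp Hx. apply ImpI.
  assert (H : prv (fatom p args :: Gm) (spp_pred c (p, length args))).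
  { eapply big_and_elim; [apply Ctx; right; right; left; reflexivity|].
    apply in_map. apply nodup_In. auto. }
  unfold spp_pred in H; simpl fst in H; simpl snd in H.
  apply nall_inst with (sg := fun i => nth i args (tvar 0)) in H;
    [| split; [exact I| apply qf_in_c]].
  simpl in H. rewrite subst_in_c, map_map in H.
  assert (E : map (fun i => subst_term (tau (length args) (fun i0 => nth i0 args (tvar 0))) (tvar i))
      (seq 0 (length args)) = args).
  { rewrite <- (map_nth_seq args (tvar 0)) at 2. apply map_ext_in.
    intros i Hi. apply in_seq in Hi. simpl. unfold tau.
    destruct (Nat.ltb_spec i (length args)); auto; lia. }
  rewrite E in H.
  assert (H2 : prv (fatom p args :: Gm) (in_c c args)) by (eapply mp; [exact H| apply ax]).
  assert (H3 : prv (fatom p args :: Gm) (in1 c (tvar x))).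
  { eapply big_and_elim; [exact H2|]. apply in_map; auto. }
  eapply mp; [apply Ctx; right; left; reflexivity| exact H3].
Qed.

Lemma eq_bot a : In a c -> prv Gm (fimp (feq (tvar x) (tconst a)) fbot).
Proof.
  intro Ha. apply ImpI.
  eapply mp; [apply Ctx; right; left; reflexivity|].
  change (prv (feq (tvar x) (tconst a) :: Gm) (in1 c (tvar x))).
  eapply big_or_intro; [apply in_map; exact Ha| apply ax].
Qed.

Lemma eqv_bot G g : prv G (fimp g fbot) -> eqv G g fbot.
Proof. intro H; split; auto. apply ImpI; apply BotE; apply ax. Qed.

Lemma kill_eqv g : qf g -> (forall a, In a (consts g) -> In a c) ->
  (forall q, In q (preds g) -> In q (preds F)) -> eqv Gm g (kill x g).
Proof.
  induction g; simpl; intros Hq Hc Hp; try apply eqv_refl; try tauto.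
  - destruct (existsb (Nat.eqb x) (flat_map term_vars args)) eqn:E; [|apply eqv_refl].
    apply eqv_bot, atom_bot; [apply Hp; left; auto|].
    apply existsb_exists in E as [v [Hv Hxv]]. apply Nat.eqb_eq in Hxv; subst v.
    apply in_flat_map in Hv as [t [Ht Hv]]. destruct t; simpl in Hv; [|tauto].
    destruct Hv as [<-|[]]; auto.
  - destruct t as [n|a], s as [m|b]; simpl; try apply eqv_refl.
    + destruct (Nat.eqb x n) eqn:E; simpl; [|apply eqv_refl].
      apply Nat.eqb_eq in E; subst. apply eqv_bot, eq_bot, Hc; simpl; auto.
    + destruct (Nat.eqb x m) eqn:E; simpl; [|apply eqv_refl].
      apply Nat.eqb_eq in E; subst. apply eqv_bot. apply ImpI.
      eapply mp; [apply wk1; apply eq_bot, Hc; simpl; auto|].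
      apply (EqElim _ (feq (tvar 0) (tconst a)) (tconst a) (tvar x)); [apply ax| apply EqRefl].
  - apply eqv_and; [apply IHg1|apply IHg2]; try tauto; intros; (apply Hc || apply Hp);
      apply in_or_app; auto.
  - apply eqv_or; [apply IHg1|apply IHg2]; try tauto; intros; (apply Hc || apply Hp);
      apply in_or_app; auto.
  - apply eqv_imp; [apply IHg1|apply IHg2]; try tauto; intros; (apply Hc || apply Hp);
      apply in_or_app; auto.
Qed.
End Main.

Theorem lemma7 (F : form) (x : nat) (c : list nat) :
  qf F -> c <> [] -> (forall a, In a (consts F) -> In a c) ->
  (pos_weakly_restricted x F ->
     prv [SPP c F] (fimp (fneg (in_c c [tvar x])) (fiff F ftop))) /\
  (neg_weakly_restricted x F ->
     prv [SPP c F] (fimp (fneg (in_c c [tvar x])) (fiff F fbot))).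
Proof.
  intros Hq _ Hc.
  assert (K : eqv (Gm F x c) F (simp (kill x F))).
  { eapply eqv_trans; [apply kill_eqv; auto| apply eqv_simp]. }
  unfold pos_weakly_restricted, neg_weakly_restricted.
  split; intro E; rewrite E in K; destruct K as [K1 K2]; apply ImpI; apply AndI; assumption.
Qed.
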